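(* Let $p_1,p_2,q$ be non-negative integers, $k$ an integer and $x_1,x_2\in\mathbb{C}$. Then $$\sum_{l=0}^{q}(-1)^{l}B^{(k)}_{p_1+l,p_2}(x_1,x_2)\,\frac{1}{l!}\frac{d^{l}}{dx_1^{l}}\prod_{i=0}^{q-1}(x_1+i)=\sum_{l=0}^{q}(-1)^{l}B^{(k)}_{p_1,p_2+l}(x_1,x_2)\,\frac{1}{l!}\frac{d^{l}}{dx_2^{l}}\prod_{i=0}^{q-1}(x_2+i)=\sum_{l=0}^{p_1+p_2}S_{1,x_1+q}^{1,x_2+q,p_2}(p_1,l)\frac{(-1)^{l}(l+q)!}{(l+q+1)^{k}}.$$ (Empty products equal $1$.)
   Context: For non-negative integers $p_1,p_2,l$ and $x_1,x_2\in\mathbb{C}$, the generalized Stirling numbers are $$S_{1,x_1}^{1,x_2,p_2}(p_1,l)=\frac{1}{l!}\sum_{j=0}^{l}(-1)^{j}\binom{l}{j}(l-j+x_1)^{p_1}(l-j+x_2)^{p_2}.$$ For an integer $k$, the bi-variate poly-Bernoulli polynomial is $$B^{(k)}_{p_1,p_2}(x_1,x_2)=\sum_{l=0}^{p_1+p_2}S_{1,x_1}^{1,x_2,p_2}(p_1,l)\frac{(-1)^{l}\,l!}{(l+1)^{k}}.$$ *)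

(* Defs.v *)
From HB Require Import structures.
From mathcomp Require Import all_boot all_order all_algebra.
Set Implicit Arguments. Unset Strict Implicit. Unset Printing Implicit Defensive.
Import Order.TTheory GRing.Theory Num.Theory.
Local Open Scope ring_scope.

(* Generalized Stirling numbers
   S_{1,x1}^{1,x2,p2}(p1,l) = 1/l! sum_{j=0}^l (-1)^j C(l,j) (l-j+x1)^p1 (l-j+x2)^p2 *)
Definition gstirling (C : numClosedFieldType) (x1 x2 : C) (p2 p1 l : nat) : C :=
  (l`!%:R)^-1 * \sum_(j < l.+1)
     ((-1) ^+ j * 'C(l, j)%:R * ((l - j)%:R + x1) ^+ p1 * ((l - j)%:R + x2) ^+ p2).

Definition polyBernoulli2 (C : numClosedFieldType) (k : int) (p1 p2 : nat) (x1 x2 : C) : C :=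
  \sum_(l < (p1 + p2).+1)
     gstirling x1 x2 p2 p1 l * ((-1) ^+ l * l`!%:R / ((l.+1)%:R ^ k)).

Definition risingPoly (C : numClosedFieldType) (q : nat) : {poly C} :=
  \prod_(i < q) ('X + (i%:R)%:P).

(* Main.v *)
Require Import Defs.
From HB Require Import structures.
From mathcomp Require Import all_boot all_order all_algebra.
From mathcomp Require Import ring.
Import Order.TTheory GRing.Theory Num.Theory.
Local Open Scope ring_scope.

Definition Tf (C : numClosedFieldType) (l : nat) (g : nat -> C) : C :=
  \sum_(i < l.+1) (-1) ^+ i * 'C(l, i)%:R * g i.
Arguments Tf {C}.

Lemma Tf_ext (C : numClosedFieldType) l (g g' : nat -> C) :
  (forall i, g i = g' i) -> Tf l g = Tf l g'.
Proof. by move=> H; apply: eq_bigr => i _; rewrite H. Qed.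


Lemma Tf_sub (C : numClosedFieldType) l (g h : nat -> C) :
  Tf l g - Tf l h = Tf l (fun i => g i - h i).
Proof. by rewrite /Tf -sumrB; apply: eq_bigr => i _; rewrite mulrBr. Qed.

Lemma size_diff (C : numClosedFieldType) (f : {poly C}) :
  leq (size (f \Po ('X + 1) - f)) (size f).-1.
Proof.
have s2 : size ('X + 1 : {poly C}) = 2 by rewrite -polyC1 size_XaddC.
apply/leq_sizeP => j hj; rewrite coefB.
have scomp := size_comp_poly2 f s2.
case: (ltngtP j (size f).-1).
- by rewrite ltnNge hj.
- move=> lt; rewrite !nth_default ?subrr ?scomp //; case: (size f) lt => // *; exact: ltnW.
move=> ej.
rewrite ej; have h1 : leq 2 (size ('X + 1 : {poly C})%R) by rewrite s2.
have := lead_coef_comp f h1.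
have -> : lead_coef ('X + 1 : {poly C}) = 1 by rewrite -polyC1 lead_coefXaddC.
rewrite expr1n mulr1 /lead_coef scomp => ->; by rewrite subrr.
Qed.

Lemma Tf_pascal (C : numClosedFieldType) l (g : nat -> C) :
  Tf l.+1 g = Tf l g - Tf l (fun i => g i.+1).
Proof.
rewrite /Tf big_ord_recl /= expr0 bin0 mul1r.
under eq_bigr => i _ do rewrite /bump /= binS natrD mulrDr mulrDl.
rewrite big_split /=.
rewrite addrA; congr (_ + _).
  rewrite [in RHS]big_ord_recl /= expr0 bin0 mul1r; congr (_ + _).
  rewrite [in LHS]big_ord_recr /= bin_small // mulr0 mul0r addr0.
  by apply: eq_bigr => i _; rewrite add1n.
rewrite -sumrN; apply: eq_bigr => i _; rewrite exprS add1n; ring.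
Qed.
Lemma Tf_vanish (C : numClosedFieldType) l (f : {poly C}) :
  leq (size f) l -> Tf l (fun i => f.[i%:R]) = 0.
Proof.
elim: l f => [|l IH] f hs.
  move: hs; rewrite leqn0 size_poly_eq0 => /eqP ->.
  by rewrite /Tf big1 // => i _; rewrite horner0 mulr0.
rewrite Tf_pascal Tf_sub.
have -> : Tf l (fun i => f.[i%:R] - f.[i.+1%:R]) =
          - Tf l (fun i => (f \Po ('X + 1) - f).[i%:R]).
  rewrite /Tf -sumrN; apply: eq_bigr => i _.
  rewrite hornerD hornerN horner_comp hornerD hornerX hornerC -natr1 //=; ring.
rewrite IH ?oppr0 //; have h := @size_diff C f; apply: leq_trans h _.
by move: hs; case: (size f).
Qed.

Lemma sign2 (C : numClosedFieldType) i : (-1) ^+ i * (-1) ^+ i = 1 :> C.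
Proof. by rewrite -exprMn mulrNN mulr1 expr1n. Qed.

Lemma signB (C : numClosedFieldType) l i : leq i l ->
  (-1) ^+ (l - i) = (-1) ^+ l * (-1) ^+ i :> C.
Proof. by move=> h; rewrite -{2}(subnK h) exprD -mulrA sign2 mulr1. Qed.

Lemma gst_Tf (C : numClosedFieldType) (x1 x2 : C) p2 p1 l :
  gstirling x1 x2 p2 p1 l = (l`!%:R)^-1 *
    ((-1) ^+ l * Tf l (fun i => (i%:R + x1) ^+ p1 * (i%:R + x2) ^+ p2)).
Proof.
rewrite /gstirling; congr (_ * _); rewrite /Tf big_distrr.
rewrite (reindex_inj rev_ord_inj) /=; apply: eq_bigr => i _.
have hi : leq i l by rewrite -ltnS.
rewrite subSS subKn // bin_sub // signB //; ring.
Qed.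

Definition uu (C : numClosedFieldType) (k : int) (m : nat) : C := ((m.+1)%:R ^ k)^-1.

Lemma pb_Tf (C : numClosedFieldType) k p1 p2 (x1 x2 : C) :
  polyBernoulli2 k p1 p2 x1 x2 = \sum_(m < (p1 + p2).+1)
     Tf m (fun i => (i%:R + x1) ^+ p1 * (i%:R + x2) ^+ p2) * uu C k m.
Proof.
rewrite /polyBernoulli2; apply: eq_bigr => m _; rewrite gst_Tf /uu.
have hf : (m`!%:R : C) != 0 by rewrite pnatr_eq0 -lt0n fact_gt0.
set T := Tf _ _; set Y := (_ ^ k).
set Yi := Y^-1; set a := (m`!%:R : C).
transitivity ((-1) ^+ m * (-1) ^+ m * (a^-1 * a) * (T * Yi)); first by ring.
by rewrite sign2 mulVf // !mul1r.
Qed.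

Lemma R_neg (C : numClosedFieldType) q n :
  (risingPoly C q).[- n%:R] = (-1) ^+ q * (n ^_ q)%:R.
Proof.
rewrite /risingPoly; elim: q => [|q IH].
  by rewrite big_ord0 hornerC expr0 mul1r ffactn0.
rewrite big_ord_recr /= hornerM IH hornerD hornerX hornerC ffactnSr.
case: (leqP q n) => h.
  rewrite natrM natrB // exprS; ring.
by rewrite ffact_small // !(mul0r, mulr0).
Qed.

Lemma R_size (C : numClosedFieldType) q : leq (size (risingPoly C q)) q.+1.
Proof.
rewrite /risingPoly; elim: q => [|q IH].
  by rewrite big_ord0 size_poly1.
rewrite big_ord_recr /=; apply: leq_trans (size_mul_leq _ _) _.
by rewrite size_XaddC addn2 /=.
Qed.

Lemma ext_sum (C : numClosedFieldType) k (f : {poly C}) n N :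
  leq (size f) n -> leq n N ->
  \sum_(m < n) Tf m (fun i => f.[i%:R]) * uu C k m =
  \sum_(m < N) Tf m (fun i => f.[i%:R]) * uu C k m.
Proof.
move=> hs hn; rewrite (big_ord_widen N (fun m => Tf m (fun i => f.[i%:R]) * uu C k m) hn).
rewrite big_mkcond; apply: eq_bigr => m _; case: ifP => // /negbT.
rewrite -leqNgt => h; rewrite Tf_vanish ?mul0r //; exact: leq_trans hs h.
Qed.

Lemma Tf_sum (C : numClosedFieldType) n m (a : nat -> C) (g : nat -> nat -> C) :
  \sum_(l < n) a l * Tf m (g l) = Tf m (fun i => \sum_(l < n) a l * g l i).
Proof.
rewrite /Tf; under eq_bigr do rewrite big_distrr.
rewrite exchange_big; apply: eq_bigr => i _ /=; rewrite big_distrr.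
by apply: eq_bigr => l _; rewrite /= mulrCA !mulrA.
Qed.

Lemma coefN (C : numClosedFieldType) q (x : C) (l : nat) :
  (l`!%:R)^-1 * ((risingPoly C q)^`(l)).[x] = ((risingPoly C q)^`N(l)).[x].
Proof.
have hf : (l`!%:R : C) != 0 by rewrite pnatr_eq0 -lt0n fact_gt0.
by rewrite nderivn_def hornerMn -[X in _ * X]mulr_natr mulrCA mulVf ?mulr1.
Qed.

Lemma taylor_pt (C : numClosedFieldType) q (x e : C) (i : nat) :
  \sum_(l < q.+1) (-1) ^+ l * ((l`!%:R)^-1 * ((risingPoly C q)^`(l)).[x]) *
      (e * (i%:R + x) ^+ l)
  = e * (risingPoly C q).[- i%:R].
Proof.
have -> : - i%:R = x + (- (i%:R + x)) by ring.
rewrite (nderiv_taylor_wide _ (R_size C q)); last by rewrite /GRing.comm mulrC.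
rewrite big_distrr; apply: eq_bigr => l _ /=; rewrite coefN [in RHS]exprNn; ring.
Qed.

Lemma side (C : numClosedFieldType) k p q (x : C) (E : nat -> C)
    (G : nat -> {poly C}) :
  (forall l, leq (size (G l)) (p + l).+1) ->
  (forall l i, (G l).[i%:R] = E i * (i%:R + x) ^+ l) ->
  \sum_(l < q.+1) (-1) ^+ l *
     (\sum_(m < (p + l).+1) Tf m (fun i => (G l).[i%:R]) * uu C k m) *
     ((l`!%:R)^-1 * ((risingPoly C q)^`(l)).[x])
  = \sum_(m < (p + q).+1)
      Tf m (fun i => E i * (risingPoly C q).[- i%:R]) * uu C k m.
Proof.
move=> hs hG.
under eq_bigr => l _.
  rewrite (@ext_sum C k _ _ _ (hs l) (_ : leq (p + l).+1 (p + q).+1)); last first.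
    by rewrite ltnS leq_add2l -ltnS.
  rewrite mulrAC big_distrr /=.
  over.
rewrite exchange_big; apply: eq_bigr => m _ /=.
under eq_bigr do rewrite mulrA.
rewrite -big_distrl /=; congr (_ * _).
rewrite (@Tf_sum C _ _ (fun l => (-1) ^+ l * ((l`!%:R)^-1 * ((risingPoly C q)^`(l)).[x]))
           (fun l i => (G l).[i%:R])).
apply: Tf_ext => i; under eq_bigr do rewrite hG.
exact: taylor_pt.
Qed.

Lemma binff (l q i : nat) : leq i l ->
  ('C(q + l, i + q) * (i + q) ^_ q = (q + l) ^_ q * 'C(l, i))%N.
Proof.
move=> hi.
have h1 : ((i + q) ^_ q * i`! = (i + q)`!)%N.
  by have := ffact_fact (leq_addl i q); rewrite addnK.
have h2 : ('C(q + l, i + q) * ((i + q)`! * (l - i)`!) = (q + l)`!)%N.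
  have := @bin_fact (q + l) (i + q); rewrite [(q + l)%N]addnC subnDr; apply.
  by rewrite leq_add2r.
have h3 := bin_fact hi.
have h4 : ((q + l) ^_ q * l`! = (q + l)`!)%N.
  by have := ffact_fact (leq_addr l q); rewrite addKn.
apply/eqP; rewrite -(eqn_pmul2r (fact_gt0 i)) -(eqn_pmul2r (fact_gt0 (l - i))).
apply/eqP.
transitivity ('C(q + l, i + q) * (((i + q) ^_ q * i`!) * (l - i)`!))%N.
  by rewrite !mulnA.
rewrite h1 h2.
transitivity ((q + l) ^_ q * ('C(l, i) * (i`! * (l - i)`!)))%N.
  by rewrite h3 h4.
by rewrite !mulnA.
Qed.

Lemma Tlow (C : numClosedFieldType) q m (E : nat -> C) : leq m.+1 q ->
  Tf m (fun i => E i * (risingPoly C q).[- i%:R]) = 0.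
Proof.
move=> hm; rewrite /Tf big1 // => i _.
rewrite R_neg ffact_small ?mulr0 //.
exact: leq_trans (ltn_ord i) hm.
Qed.

Lemma Tshift (C : numClosedFieldType) q l (E : nat -> C) :
  Tf (q + l) (fun i => E i * (risingPoly C q).[- i%:R]) =
  ((q + l) ^_ q)%:R * Tf l (fun i => E (i + q)%N).
Proof.
rewrite /Tf -addnS big_split_ord /= big1 ?add0r; last first.
  move=> i _; rewrite R_neg ffact_small ?mulr0 ?mul0r //.
rewrite big_distrr; apply: eq_bigr => i _ /=.
rewrite R_neg addnC exprD.
have hi : leq i l by rewrite -ltnS.
have hb := congr1 (fun n => n%:R : C) (@binff l q i hi); rewrite /= !natrM in hb.
transitivity ((-1) ^+ q * (-1) ^+ q * ((-1) ^+ i *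
   ('C(q + l, i + q)%:R * ((i + q) ^_ q)%:R) * E (i + q)%N)); first by ring.
rewrite sign2 mul1r hb; ring.
Qed.

Lemma rhs (C : numClosedFieldType) k p1 p2 q (x1 x2 : C) :
  \sum_(m < (p1 + p2 + q).+1)
     Tf m (fun i => (i%:R + x1) ^+ p1 * (i%:R + x2) ^+ p2 *
                    (risingPoly C q).[- i%:R]) * uu C k m
  = \sum_(l < (p1 + p2).+1)
      gstirling (x1 + q%:R) (x2 + q%:R) p2 p1 l
      * ((-1) ^+ l * (l + q)`!%:R / (((l + q).+1)%:R ^ k)).
Proof.
have -> : (p1 + p2 + q).+1 = (q + (p1 + p2).+1)%N by rewrite addnS addnC.
rewrite big_split_ord /= big1 ?add0r; last first.
  by move=> i _; rewrite Tlow ?mul0r.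
apply: eq_bigr => l _ /=; rewrite Tshift gst_Tf /uu.
rewrite (@Tf_ext C l (fun i => ((i + q)%:R + x1) ^+ p1 * ((i + q)%:R + x2) ^+ p2)
   (fun i => (i%:R + (x1 + q%:R)) ^+ p1 * (i%:R + (x2 + q%:R)) ^+ p2)); last first.
  by move=> i; rewrite natrD !addrA [_ + x1]addrAC [_ + x2]addrAC.
have hf : (l`!%:R : C) != 0 by rewrite pnatr_eq0 -lt0n fact_gt0.
have hff : ((l + q)`!%:R : C) = ((q + l) ^_ q)%:R * l`!%:R.
  by rewrite -natrM -{3}(addKn q l) ffact_fact ?leq_addr // addnC.
rewrite hff (addnC l q).
set T := Tf _ _; set Yi := (_ ^ k)^-1; set a := (l`!%:R : C).
transitivity ((-1) ^+ l * (-1) ^+ l * (a^-1 * a) * (((q + l) ^_ q)%:R * T * Yi)).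
  by rewrite sign2 mulVf // !mul1r.
by ring.
Qed.

Theorem proposition4p1 (C : numClosedFieldType) (p1 p2 q : nat) (k : int) (x1 x2 : C) :
  (\sum_(l < q.+1)
      (-1) ^+ l * polyBernoulli2 k (p1 + l) p2 x1 x2
      * ((l`!%:R)^-1 * ((risingPoly C q)^`(l)).[x1])
   = \sum_(l < q.+1)
      (-1) ^+ l * polyBernoulli2 k p1 (p2 + l) x1 x2
      * ((l`!%:R)^-1 * ((risingPoly C q)^`(l)).[x2]))
  /\
  (\sum_(l < q.+1)
      (-1) ^+ l * polyBernoulli2 k p1 (p2 + l) x1 x2
      * ((l`!%:R)^-1 * ((risingPoly C q)^`(l)).[x2])
   = \sum_(l < (p1 + p2).+1)
      gstirling (x1 + q%:R) (x2 + q%:R) p2 p1 l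
      * ((-1) ^+ l * (l + q)`!%:R / (((l + q).+1)%:R ^ k))).
Proof.
set E := fun i : nat => (i%:R + x1) ^+ p1 * (i%:R + x2) ^+ p2.
have sz : forall a b (y1 y2 : C),
    leq (size (('X + y1%:P) ^+ a * ('X + y2%:P) ^+ b)) (a + b).+1.
  move=> a b y1 y2; apply: leq_trans (size_mul_leq _ _) _.
  have hs : forall n (y : C), size (('X + y%:P) ^+ n) = n.+1.
    by move=> n y; rewrite -[y]opprK polyCN size_exp_XsubC.
  by rewrite !hs addSn addnS.
have L2 : \sum_(l < q.+1)
      (-1) ^+ l * polyBernoulli2 k p1 (p2 + l) x1 x2
      * ((l`!%:R)^-1 * ((risingPoly C q)^`(l)).[x2])
   = \sum_(m < (p1 + p2 + q).+1)
      Tf m (fun i => E i * (risingPoly C q).[- i%:R]) * uu C k m.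
  set G := fun l : nat => ('X + x1%:P) ^+ p1 * ('X + x2%:P) ^+ (p2 + l).
  rewrite -(@side C k (p1 + p2) q x2 E G); last first.
  - by move=> l i; rewrite /G /E hornerM !hornerE exprD; ring.
  - by move=> l; rewrite /G -addnA; apply: sz.
  apply: eq_bigr => l _; rewrite pb_Tf addnA; congr (_ * _ * _).
  by apply: eq_bigr => m _; congr (_ * _); apply: Tf_ext => i; rewrite /G hornerM !hornerE.
split; last by rewrite L2 rhs.
rewrite L2.
set G := fun l : nat => ('X + x1%:P) ^+ (p1 + l) * ('X + x2%:P) ^+ p2.
rewrite -(@side C k (p1 + p2) q x1 E G); last first.
- by move=> l i; rewrite /G /E hornerM !hornerE exprD; ring.
- by move=> l; rewrite /G addnAC; apply: sz.
apply: eq_bigr => l _; rewrite pb_Tf addnAC; congr (_ * _ * _).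
by apply: eq_bigr => m _; congr (_ * _); apply: Tf_ext => i; rewrite /G hornerM !hornerE.
Qed.
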